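(* Let $\tau_1(\mathbf X)$ be the lifetime of a coherent system whose component lifetimes $X_1,\dots,X_n$ are (possibly dependent) identically distributed as $X$, with domination function $h_1$, i.e. $\bar F_{\tau_1(\mathbf X)}(x)=h_1(\bar F_X(x))$; and let $\tau_2(\mathbf Y)$ be the lifetime of a coherent system whose component lifetimes $Y_1,\dots,Y_m$ are identically distributed as $Y$, with domination function $h_2$, i.e. $\bar F_{\tau_2(\mathbf Y)}(x)=h_2(\bar F_Y(x))$. For $p\in(0,1)$ set $H_i(p)=p h_i'(p)/h_i(p)$, $i=1,2$. Suppose that (i) $H_1(p)$ and $H_1(p)/H_2(p)$ are decreasing in $p\in(0,1)$; (ii) $(1-p)H_1'(p)/H_1(p)$ or $(1-p)H_2'(p)/H_2(p)$ is decreasing in $p\in(0,1)$; (iii) $X\underset{c}{\prec}Y$ and $Y\le_{rhr}X$. Then $\tau_1(\mathbf X)\underset{c}{\prec}\tau_2(\mathbf Y)$.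
   Context: All random variables are non-negative and absolutely continuous with support $[0,\infty)$. For a random variable $W$, $f_W$, $F_W$, $\bar F_W=1-F_W$ denote its density, cdf and survival function, $r_W=f_W/\bar F_W$ its hazard (failure) rate and $\tilde r_W=f_W/F_W$ its reversed hazard rate. $X\le_{rhr}Y$ means $F_Y(x)/F_X(x)$ is increasing in $x$. $X\underset{c}{\prec}Y$ ($X$ ages faster than $Y$ in failure rate) means $r_X(x)/r_Y(x)$ is increasing in $x\ge0$. For a coherent system with identically distributed (possibly dependent) components with common lifetime distribution $X$, the system reliability can be written $h(\bar F_X(x))$, where the domination (dual distortion) function $h:[0,1]\to[0,1]$ depends on the structure and the survival copula, is increasing and continuous with $h(0)=0$, $h(1)=1$; domination functions are assumed differentiable as needed. ''Increasing'' means non-decreasing, ''decreasing'' means non-increasing. *)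

(* Defs.v *)
From Stdlib Require Import Reals.
From Coquelicot Require Import Coquelicot.
Open Scope R_scope.

(* A non-negative absolutely continuous lifetime with support [0,oo),
   described by its survival function Sbar = 1 - F. *)
Definition lifetime (S : R -> R) : Prop :=
  (forall x, x <= 0 -> S x = 1) /\
  (forall x y, 0 <= x -> x < y -> S y < S x) /\
  (forall x, continuous S x) /\
  is_lim S p_infty 0 /\
  (forall x, 0 < x -> ex_derive S x).

Definition density (S : R -> R) (x : R) : R := - Derive S x.
Definition cdf (S : R -> R) (x : R) : R := 1 - S x.
Definition hazard (S : R -> R) (x : R) : R := density S x / S x.
Definition rev_hazard (S : R -> R) (x : R) : R := density S x / cdf S x.

Definition rhr_le (SX SY : R -> R) : Prop :=
  forall x y, 0 < x -> x <= y -> cdf SY x / cdf SX x <= cdf SY y / cdf SX y.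

Definition ages_faster (SX SY : R -> R) : Prop :=
  forall x y, 0 < x -> x <= y -> hazard SX x / hazard SY x <= hazard SX y / hazard SY y.

Definition domination (h : R -> R) : Prop :=
  h 0 = 0 /\ h 1 = 1 /\
  (forall p q, 0 <= p -> p <= q -> q <= 1 -> h p <= h q) /\
  (forall p, 0 <= p <= 1 -> 0 <= h p <= 1) /\
  (forall p, 0 <= p <= 1 -> continuous h p) /\
  (forall p, 0 < p < 1 -> ex_derive h p) /\
  (forall p, 0 < p < 1 -> ex_derive (Derive h) p).

Definition Hfun (h : R -> R) (p : R) : R := p * Derive h p / h p.

Definition decreasing_01 (g : R -> R) : Prop :=
  forall p q, 0 < p -> p <= q -> q < 1 -> g q <= g p.

(* Main.v *)
Require Import Defs.
From Stdlib Require Import Reals Lra.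
From Coquelicot Require Import Coquelicot.
Open Scope R_scope.
Lemma deriv_ge0 (f : R -> R) x l d : 0 < d -> is_derive f x l ->
  (forall y, x < y < x + d -> f x <= f y) -> 0 <= l.
Proof.
  intros Hd Hf Hm. apply is_derive_Reals in Hf.
  destruct (Rle_or_lt 0 l) as [|Hl]; auto.
  assert (He : 0 < - l / 2) by lra.
  destruct (Hf (-l/2) He) as [del Hdel].
  set (h := Rmin (del/2) (d/2)).
  assert (Hh : 0 < h) by (unfold h; apply Rmin_pos; destruct del; simpl; lra).
  assert (Hh1 : h < del) by (unfold h; destruct del; simpl in *; generalize (Rmin_l (pos/2) (d/2)); lra).
  assert (Hh2 : h < d) by (unfold h; generalize (Rmin_r (del/2) (d/2)); lra).
  specialize (Hdel h ltac:(lra) ltac:(rewrite Rabs_right; lra)).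
  assert (Hq : 0 <= (f (x + h) - f x) / h).
  { apply Rdiv_le_0_compat; try lra. specialize (Hm (x+h) ltac:(lra)); lra. }
  apply Rabs_def2 in Hdel. lra.
Qed.
Lemma comp_deriv (f g : R -> R) x df dg : is_derive f (g x) df -> is_derive g x dg ->
  is_derive (fun y => f (g y)) x (dg * df).
Proof. intros. exact (is_derive_comp f g x df dg H H0). Qed.
Lemma deriv_le0 (f : R -> R) x l d : 0 < d -> is_derive f x l ->
  (forall y, x < y < x + d -> f y <= f x) -> l <= 0.
Proof.
  intros Hd Hf Hm.
  assert (H := is_derive_opp f x l Hf).
  assert (0 <= opp l).
  { apply (deriv_ge0 _ x _ d Hd H). intros y Hy. unfold opp; simpl. specialize (Hm y Hy). lra. }
  unfold opp in H0; simpl in H0. lra.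
Qed.
Lemma surv_lim S : lifetime S -> forall eps, 0 < eps -> exists M, forall y, M < y -> - eps < S y < eps.
Proof.
  intros [_ [_ [_ [Hl _]]]] eps He.
  apply is_lim_spec in Hl. destruct (Hl (mkposreal eps He)) as [M HM].
  exists M. intros y Hy. specialize (HM y Hy). simpl in HM. apply Rabs_def2 in HM. lra.
Qed.
Lemma surv_bounds S x : lifetime S -> 0 < x -> 0 < S x < 1.
Proof.
  intros HS Hx. pose proof HS as [H0 [Hd _]].
  split.
  - destruct (Rlt_or_le 0 (S x)) as [|Hn]; auto.
    assert (H1 : S (x+1) < S x) by (apply Hd; lra).
    destruct (surv_lim S HS (- S (x+1))) as [M HM]; [lra|].
    set (y := Rmax M (x+1) + 1).
    assert (Hy1 : M < y) by (unfold y; generalize (Rmax_l M (x+1)); lra).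
    assert (Hy2 : x + 1 < y) by (unfold y; generalize (Rmax_r M (x+1)); lra).
    specialize (HM y Hy1). assert (S y < S (x+1)) by (apply Hd; lra). lra.
  - assert (S x < S 0) by (apply Hd; lra). assert (S 0 = 1) by (apply H0; lra). lra.
Qed.
Lemma surv_le S x y : lifetime S -> 0 <= x -> x <= y -> S y <= S x.
Proof.
  intros [_ [Hd _]] Hx Hxy. destruct (Req_dec x y). subst; lra.
  left; apply Hd; lra.
Qed.
Lemma surv_ex S x : lifetime S -> 0 < x -> ex_derive S x.
Proof. intros [_ [_ [_ [_ H]]]]; auto. Qed.
Lemma dens_ge0 S x : lifetime S -> 0 < x -> 0 <= density S x.
Proof.
  intros HS Hx. unfold density.
  assert (Derive S x <= 0); [|lra].
  apply (deriv_le0 S x _ 1); [lra| apply Derive_correct, surv_ex; auto |].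
  intros y Hy. apply surv_le; auto; lra.
Qed.
Lemma cdf_derive S z : lifetime S -> 0 < z -> is_derive (cdf S) z (density S z).
Proof.
  intros HS Hz. unfold cdf, density.
  pose proof (is_derive_minus (fun _ => 1) S z _ _ (is_derive_const 1 z) (Derive_correct S z (surv_ex S z HS Hz))) as H.
  replace (- Derive S z) with (minus (zero : R) (Derive S z)). exact H.
  unfold minus, plus, opp, zero; simpl; ring.
Qed.
Lemma SY_le_SX SX SY z : lifetime SX -> lifetime SY -> rhr_le SY SX -> 0 < z -> SY z <= SX z.
Proof.
  intros HX HY Hr Hz.
  destruct (Rle_or_lt (SY z) (SX z)) as [|Hlt]; auto. exfalso.
  pose proof (surv_bounds SX z HX Hz). pose proof (surv_bounds SY z HY Hz).
  set (r := cdf SX z / cdf SY z).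
  assert (Hr1 : 1 < r).
  { unfold r, cdf. apply Rlt_div_r; lra. }
  destruct (surv_lim SY HY ((r-1)/(2*r))) as [M HM].
  { apply Rdiv_lt_0_compat; lra. }
  set (y := Rmax M z + 1).
  assert (Hy1 : M < y) by (unfold y; generalize (Rmax_l M z); lra).
  assert (Hy2 : z < y) by (unfold y; generalize (Rmax_r M z); lra).
  specialize (HM y Hy1). specialize (Hr z y Hz ltac:(lra)).
  pose proof (surv_bounds SX y HX ltac:(lra)). pose proof (surv_bounds SY y HY ltac:(lra)).
  fold r in Hr. unfold cdf in Hr.
  assert (Hq : (1 - SX y) / (1 - SY y) * (1 - SY y) = 1 - SX y) by (field; lra).
  assert (Hd : (r - 1) / (2 * r) * (2*r) = r - 1) by (field; lra).
  assert (r * (1 - SY y) <= (1 - SX y) / (1 - SY y) * (1 - SY y)) by (apply Rmult_le_compat_r; lra).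
  nra.
Qed.
Lemma rho_ineq SX SY z : lifetime SX -> lifetime SY -> rhr_le SY SX -> 0 < z ->
  0 <= density SX z * (1 - SY z) - (1 - SX z) * density SY z.
Proof.
  intros HX HY Hr Hz.
  pose proof (surv_bounds SX z HX Hz). pose proof (surv_bounds SY z HY Hz).
  pose proof (is_derive_div _ _ z _ _ (cdf_derive SX z HX Hz) (cdf_derive SY z HY Hz)) as Hd.
  assert (cdf SY z <> 0) by (unfold cdf; lra).
  specialize (Hd H1).
  assert (Hg := deriv_ge0 _ z _ 1 ltac:(lra) Hd).
  assert (0 <= (density SX z * cdf SY z - cdf SX z * density SY z) / cdf SY z ^ 2).
  { apply Hg. intros y Hy. apply Hr; lra. }
  unfold cdf in *.
  assert (0 < (1 - SY z)^2) by (apply pow_lt; lra).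
  apply Rmult_le_compat_r with (r := (1 - SY z)^2) in H2; [|lra].
  unfold Rdiv in H2. rewrite Rmult_assoc, Rinv_l in H2 by lra. lra.
Qed.
Lemma dom_deriv_ge0 h p : domination h -> 0 < p < 1 -> 0 <= Derive h p.
Proof.
  intros [_ [_ [Hm [_ [_ [Hd _]]]]]] Hp.
  apply (deriv_ge0 h p _ (1 - p)); [lra| apply Derive_correct, Hd; auto|].
  intros y Hy. apply Hm; lra.
Qed.
Lemma H_ge0 h p : domination h -> (forall p, 0 < p < 1 -> 0 < h p) -> 0 < p < 1 -> 0 <= Hfun h p.
Proof.
  intros Hh Hpos Hp. unfold Hfun. apply Rdiv_le_0_compat; [|apply Hpos; auto].
  apply Rmult_le_pos; [lra| apply dom_deriv_ge0; auto].
Qed.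
Lemma H_ex h p : domination h -> (forall p, 0 < p < 1 -> 0 < h p) -> 0 < p < 1 -> ex_derive (Hfun h) p.
Proof.
  intros Hh Hpos Hp. destruct Hh as [_ [_ [_ [_ [_ [Hd Hdd]]]]]]. unfold Hfun.
  apply ex_derive_div.
  - apply ex_derive_mult. apply ex_derive_id. apply Hdd; auto.
  - apply Hd; auto.
  - specialize (Hpos p Hp); lra.
Qed.
Lemma hazard_comp S h t : lifetime S -> domination h -> (forall p, 0 < p < 1 -> 0 < h p) -> 0 < t ->
  hazard (fun x => h (S x)) t = hazard S t * Hfun h (S t).
Proof.
  intros HS Hh Hpos Ht. pose proof (surv_bounds S t HS Ht) as Hb.
  unfold hazard, density, Hfun. rewrite Derive_comp.
  - specialize (Hpos _ Hb). field. lra.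
  - destruct Hh as [_ [_ [_ [_ [_ [Hd _]]]]]]. apply Hd; auto.
  - apply surv_ex; auto.
Qed.
Lemma numA A B u v al be ga al' be' ga' :
  0 <= A -> 0 <= B -> 0 < v -> v <= u -> u < 1 -> 0 < al -> 0 < be -> 0 < ga ->
  0 <= A * (1 - v) - (1 - u) * B ->
  (1 - u) * al' / al <= (1 - v) * ga' / ga ->
  ga' <= 0 ->
  (ga' * be - ga * be') / be ^ 2 <= 0 ->
  0 <= ((- A * al') * be - al * (- B * be')) / be ^ 2.
Proof.
  intros HA HB Hv Hvu Hu Hal Hbe Hga Hrho Hpsi Hga' Hrat.
  assert (Hb2 : 0 < be ^ 2) by (apply pow_lt; lra).
  assert (Hrat' : ga' * be - ga * be' <= 0).
  { apply Rmult_le_compat_r with (r := be^2) in Hrat; [|lra].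
    unfold Rdiv in Hrat. rewrite Rmult_assoc, Rinv_l in Hrat by lra. lra. }
  apply Rdiv_le_0_compat; [|lra].
  set (p := al' / al). set (q := ga' / ga).
  assert (Eal : al' = p * al) by (unfold p; field; lra).
  assert (Ega : ga' = q * ga) by (unfold q; field; lra).
  assert (Hpsi' : (1 - u) * p <= (1 - v) * q) by (unfold p, q; unfold Rdiv in *; rewrite <- !Rmult_assoc; lra).
  rewrite Ega in Hrat', Hga'. rewrite Eal.
  assert (Hq : q <= 0) by nra.
  assert (Hbq : q * be <= be') by nra.
  assert (Hk : 0 <= - A * (1 - v) * ((1 - u) * p) + B * (1 - u) * ((1 - v) * q)).
  { assert (0 <= (1-u) * B) by nra.
    assert (HP : (1 - u) * p <= 0) by (assert ((1-v)*q <= 0) by (apply Rmult_le_0_l; lra); lra).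
    assert (- A * (1 - v) * ((1 - u) * p) >= - ((1 - u) * B) * ((1 - u) * p))
      by (apply Rle_ge; apply Rmult_le_compat_r with (r := -((1-u)*p)) in Hrho; lra).
    assert (- ((1 - u) * B) * ((1 - u) * p) >= - ((1 - u) * B) * ((1 - v) * q)) by
      (apply Rle_ge; apply Rmult_le_compat_l with (r := (1-u)*B) in Hpsi'; lra).
    lra. }
  assert (Hk2 : 0 <= - A * p + B * q).
  { assert (Hp : 0 < (1-u)*(1-v)) by (apply Rmult_lt_0_compat; lra).
    apply (Rmult_le_reg_l ((1-u)*(1-v))); auto. rewrite Rmult_0_r.
    replace ((1 - u) * (1 - v) * (- A * p + B * q)) with (- A * (1 - v) * ((1 - u) * p) + B * (1 - u) * ((1 - v) * q)) by ring. auto. }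
  assert (HB' : B * (q * be) <= B * be') by (apply Rmult_le_compat_l; lra).
  assert (0 <= al * be * (- A * p + B * q)) by (apply Rmult_le_pos; [apply Rmult_le_pos|]; lra).
  assert (al * (B * (q * be)) <= al * (B * be')) by (apply Rmult_le_compat_l; lra).
  replace (- A * (p * al) * be - al * (- B * be')) with (al * be * (- A * p) + al * (B * be')) by ring.
  replace (al * be * (- A * p + B * q)) with (al * be * (- A * p) + al * (B * (q * be))) in H0 by ring.
  lra.
Qed.
Lemma numB A B u v al be de al' be' de' :
  0 <= A -> 0 <= B -> 0 < v -> v <= u -> u < 1 -> 0 < al -> 0 < be -> 0 <= de ->
  0 <= A * (1 - v) - (1 - u) * B ->
  (1 - u) * de' / de <= (1 - v) * be' / be ->
  al' <= 0 ->
  (0 < de -> (al' * de - al * de') / de ^ 2 <= 0) ->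
  0 <= ((- A * al') * be - al * (- B * be')) / be ^ 2.
Proof.
  intros HA HB Hv Hvu Hu Hal Hbe Hde Hrho Hpsi Hal' Hrat.
  assert (Hb2 : 0 < be ^ 2) by (apply pow_lt; lra).
  apply Rdiv_le_0_compat; [|lra].
  destruct (Rle_or_lt 0 be') as [Hbe'|Hbe'].
  - assert (0 <= A * (- al') * be) by (apply Rmult_le_pos; [apply Rmult_le_pos|]; lra).
    assert (0 <= al * B * be') by (apply Rmult_le_pos; [apply Rmult_le_pos|]; lra).
    replace (- A * al' * be - al * (- B * be')) with (A * (- al') * be + al * B * be') by ring. lra.
  - assert (Hr : (1 - v) * be' / be < 0).
    { unfold Rdiv. apply Rmult_neg_pos; [nra| apply Rinv_0_lt_compat; lra]. }
    assert (Hde0 : 0 < de).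
    { destruct Hde as [|Hde]; auto. subst de. unfold Rdiv in Hpsi. rewrite Rinv_0 in Hpsi. lra. }
    specialize (Hrat Hde0).
    assert (Hd2 : 0 < de ^ 2) by (apply pow_lt; lra).
    assert (Hrat' : al' * de - al * de' <= 0).
    { apply Rmult_le_compat_r with (r := de^2) in Hrat; [|lra].
      unfold Rdiv in Hrat. rewrite Rmult_assoc, Rinv_l in Hrat by lra. lra. }
    set (p := al' / al). set (q := be' / be). set (s := de' / de).
    assert (Eal : al' = p * al) by (unfold p; field; lra).
    assert (Ebe : be' = q * be) by (unfold q; field; lra).
    assert (Ede : de' = s * de) by (unfold s; field; lra).
    assert (Hpsi' : (1 - u) * s <= (1 - v) * q) by (unfold s, q; unfold Rdiv in *; rewrite <- !Rmult_assoc; lra).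
    rewrite Eal, Ede in Hrat'. rewrite Eal, Ebe.
    assert (Hps : p <= s).
    { replace (p * al * de - al * (s * de)) with ((al * de) * (p - s)) in Hrat' by ring.
      assert (Had : 0 < al * de) by (apply Rmult_lt_0_compat; lra).
      destruct (Rle_or_lt p s); auto.
      assert (0 < al * de * (p - s)) by (apply Rmult_lt_0_compat; lra). lra. }
    assert (Hr' : (1 - v) * q < 0) by (replace ((1-v)*q) with ((1-v)*be'/be) by (unfold q, Rdiv; ring); lra).
    assert (Hs : (1-u) * s < 0) by lra.
    assert (Hk : 0 <= - A * (1 - v) * ((1 - u) * s) + B * (1 - u) * ((1 - v) * q)).
    { assert (0 <= (1-u) * B) by nra.
        assert (- A * (1 - v) * ((1 - u) * s) >= - ((1 - u) * B) * ((1 - u) * s))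
        by (apply Rle_ge; apply Rmult_le_compat_r with (r := -((1-u)*s)) in Hrho; lra).
      assert (- ((1 - u) * B) * ((1 - u) * s) >= - ((1 - u) * B) * ((1 - v) * q)) by
        (apply Rle_ge; apply Rmult_le_compat_l with (r := (1-u)*B) in Hpsi'; lra).
      lra. }
    assert (Hk2 : 0 <= - A * s + B * q).
    { assert (Hp : 0 < (1-u)*(1-v)) by (apply Rmult_lt_0_compat; lra).
      apply (Rmult_le_reg_l ((1-u)*(1-v))); auto. rewrite Rmult_0_r.
      replace ((1 - u) * (1 - v) * (- A * s + B * q)) with (- A * (1 - v) * ((1 - u) * s) + B * (1 - u) * ((1 - v) * q)) by ring. auto. }
    assert (HAp : A * p <= A * s) by (apply Rmult_le_compat_l; lra).
    assert (0 <= al * be * (- A * s + B * q)) by (apply Rmult_le_pos; [apply Rmult_le_pos|]; lra).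
    assert (al * be * (A * p) <= al * be * (A * s)) by (apply Rmult_le_compat_l; [apply Rmult_le_pos|]; lra).
    replace (- A * (p * al) * be - al * (- B * (q * be))) with (al * be * (- A * s + B * q) + (al * be * (A * s) - al * be * (A * p))) by ring.
    lra.
Qed.
Lemma Hderiv h p : domination h -> (forall p, 0 < p < 1 -> 0 < h p) -> 0 < p < 1 ->
  is_derive (Hfun h) p (Derive (Hfun h) p).
Proof. intros. apply Derive_correct, H_ex; auto. Qed.

Lemma G_deriv SX SY h1 h2 t :
  lifetime SX -> lifetime SY ->
  domination h1 -> domination h2 ->
  (forall p, 0 < p < 1 -> 0 < h1 p) ->
  (forall p, 0 < p < 1 -> 0 < h2 p) ->
  decreasing_01 (Hfun h1) ->
  decreasing_01 (fun p => Hfun h1 p / Hfun h2 p) ->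
  (decreasing_01 (fun p => (1 - p) * Derive (Hfun h1) p / Hfun h1 p) \/
   decreasing_01 (fun p => (1 - p) * Derive (Hfun h2) p / Hfun h2 p)) ->
  rhr_le SY SX -> 0 < t -> 0 < Hfun h1 (SX t) -> 0 < Hfun h2 (SY t) ->
  exists D, is_derive (fun t => Hfun h1 (SX t) / Hfun h2 (SY t)) t D /\ 0 <= D.
Proof.
  intros HX HY H1d H2d H1p H2p Hdec1 Hdecr Hpsi Hrhr Ht Hal Hbe.
  pose proof (surv_bounds SX t HX Ht) as Hu. pose proof (surv_bounds SY t HY Ht) as Hv.
  pose proof (SY_le_SX SX SY t HX HY Hrhr Ht) as Hvu.
  pose proof (rho_ineq SX SY t HX HY Hrhr Ht) as Hrho.
  pose proof (dens_ge0 SX t HX Ht) as HA. pose proof (dens_ge0 SY t HY Ht) as HB.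
  set (u := SX t) in *. set (v := SY t) in *.
  eexists. split.
  { apply is_derive_div; [| |cbv beta; fold v; lra].
    - apply comp_deriv. apply Hderiv; auto. apply Derive_correct, surv_ex; auto.
    - apply comp_deriv. apply Hderiv; auto. apply Derive_correct, surv_ex; auto. }
  fold u v.
  replace (Derive SX t) with (- density SX t) by (unfold density; ring).
  replace (Derive SY t) with (- density SY t) by (unfold density; ring).
  replace (- density SX t * Derive (Hfun h1) u) with (- density SX t * Derive (Hfun h1) u) by ring.
  assert (Hal' : forall w, 0 < w < 1 -> Derive (Hfun h1) w <= 0).
  { intros w Hw. apply (deriv_le0 (Hfun h1) w _ (1 - w)); [lra| apply Hderiv; auto|].
    intros z Hz. apply Hdec1; lra. }
  assert (Hrat : forall w, 0 < w < 1 -> 0 < Hfun h2 w ->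
     (Derive (Hfun h1) w * Hfun h2 w - Hfun h1 w * Derive (Hfun h2) w) / Hfun h2 w ^ 2 <= 0).
  { intros w Hw Hw2. apply (deriv_le0 (fun p => Hfun h1 p / Hfun h2 p) w _ (1 - w)); [lra| |].
    - apply is_derive_div; [apply Hderiv; auto| apply Hderiv; auto| lra].
    - intros z Hz. apply Hdecr; lra. }
  destruct Hpsi as [Hpsi|Hpsi].
  - assert (Hga : Hfun h1 u <= Hfun h1 v) by (apply Hdec1; lra).
    apply (numA _ _ u v _ _ (Hfun h1 v) _ _ (Derive (Hfun h1) v)); fold u v; try lra.
    all: try (apply Hpsi; lra).
    all: try (apply Hal'; lra).
    all: try (apply Hrat; lra).
    all: idtac.
  - apply (numB _ _ u v _ _ (Hfun h2 u) _ _ (Derive (Hfun h2) u)); fold u v; try lra.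
    all: try exact Hal. all: try exact Hbe.
    all: try (apply H_ge0; auto; lra).
    all: try (apply Hpsi; lra).
    all: try (apply Hal'; lra).
    all: try (intros; apply Hrat; lra).
    all: idtac.
Qed.
Lemma G_nonneg SX SY h1 h2 t : lifetime SX -> lifetime SY -> domination h1 -> domination h2 ->
  (forall p, 0 < p < 1 -> 0 < h1 p) -> (forall p, 0 < p < 1 -> 0 < h2 p) -> 0 < t ->
  0 <= Hfun h1 (SX t) / Hfun h2 (SY t).
Proof.
  intros HX HY H1d H2d H1p H2p Ht.
  pose proof (surv_bounds SX t HX Ht). pose proof (surv_bounds SY t HY Ht).
  unfold Rdiv. apply Rmult_le_pos. apply H_ge0; auto.
  destruct (H_ge0 h2 (SY t) H2d H2p H0) as [Hp|Hz].
  left; apply Rinv_0_lt_compat; auto. rewrite <- Hz, Rinv_0; lra.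
Qed.

Lemma G_mono SX SY h1 h2 x y :
  lifetime SX -> lifetime SY ->
  domination h1 -> domination h2 ->
  (forall p, 0 < p < 1 -> 0 < h1 p) ->
  (forall p, 0 < p < 1 -> 0 < h2 p) ->
  decreasing_01 (Hfun h1) ->
  decreasing_01 (fun p => Hfun h1 p / Hfun h2 p) ->
  (decreasing_01 (fun p => (1 - p) * Derive (Hfun h1) p / Hfun h1 p) \/
   decreasing_01 (fun p => (1 - p) * Derive (Hfun h2) p / Hfun h2 p)) ->
  rhr_le SY SX -> 0 < x -> x <= y ->
  Hfun h1 (SX x) / Hfun h2 (SY x) <= Hfun h1 (SX y) / Hfun h2 (SY y).
Proof.
  intros HX HY H1d H2d H1p H2p Hdec1 Hdecr Hpsi Hrhr Hx Hxy.
  pose proof (surv_bounds SX x HX Hx). pose proof (surv_bounds SY x HY Hx).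
  destruct (H_ge0 h1 (SX x) H1d H1p H) as [Ha|Ha];
  [destruct (H_ge0 h2 (SY x) H2d H2p H0) as [Hb|Hb]|].
  2,3: rewrite <- ?Ha, <- ?Hb; unfold Rdiv; rewrite ?Rinv_0, ?Rmult_0_l, ?Rmult_0_r;
       apply G_nonneg; auto; lra.
  assert (Hpos : forall z, x <= z <= y -> 0 < Hfun h1 (SX z) /\ 0 < Hfun h2 (SY z)).
  { intros z Hz.
    pose proof (surv_bounds SX z HX ltac:(lra)). pose proof (surv_bounds SY z HY ltac:(lra)).
    pose proof (surv_le SX x z HX ltac:(lra) ltac:(lra)).
    pose proof (surv_le SY x z HY ltac:(lra) ltac:(lra)).
    pose proof (SY_le_SX SX SY x HX HY Hrhr Hx).
    split.
    - assert (Hfun h1 (SX x) <= Hfun h1 (SX z)) by (apply Hdec1; lra). lra.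
    - assert (H1v : Hfun h1 (SX x) <= Hfun h1 (SY x)) by (apply Hdec1; lra).
      assert (Hr0 : 0 < Hfun h1 (SY x) / Hfun h2 (SY x)) by (apply Rdiv_lt_0_compat; lra).
      assert (Hr1 : Hfun h1 (SY x) / Hfun h2 (SY x) <= Hfun h1 (SY z) / Hfun h2 (SY z))
        by (apply (Hdecr (SY z) (SY x)); lra).
      destruct (H_ge0 h2 (SY z) H2d H2p H2) as [|Hz0]; auto.
      rewrite <- Hz0 in Hr1. unfold Rdiv in Hr1. rewrite Rinv_0, Rmult_0_r in Hr1. lra. }
  set (G := fun t => Hfun h1 (SX t) / Hfun h2 (SY t)).
  assert (HD : forall z, x <= z <= y -> exists D, is_derive G z D /\ 0 <= D).
  { intros z Hz. destruct (Hpos z Hz).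
    apply (G_deriv SX SY h1 h2 z); auto; lra. }
  destruct (MVT_gen G x y (Derive G)) as [c [Hc Heq]].
  - rewrite Rmin_left, Rmax_right by lra. intros z Hz.
    destruct (HD z ltac:(lra)) as [D [HD1 _]]. apply Derive_correct. exists D; auto.
  - rewrite Rmin_left, Rmax_right by lra. intros z Hz.
    destruct (HD z ltac:(lra)) as [D [HD1 _]].
    apply derivable_continuous_pt. exists D. apply is_derive_Reals; auto.
  - rewrite Rmin_left, Rmax_right in Hc by lra.
    destruct (HD c Hc) as [D [HD1 HD2]].
    rewrite (is_derive_unique G c D HD1) in Heq.
    assert (0 <= D * (y - x)) by (apply Rmult_le_pos; lra).
    change (G x <= G y). lra.
Qed.

Lemma div_split a b c d : a * b / (c * d) = a / c * (b / d).
Proof. unfold Rdiv. rewrite Rinv_mult. ring. Qed.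

Theorem theorem3p1 (SX SY h1 h2 : R -> R) :
  lifetime SX -> lifetime SY ->
  domination h1 -> domination h2 ->
  (forall p, 0 < p < 1 -> 0 < h1 p) ->
  (forall p, 0 < p < 1 -> 0 < h2 p) ->
  decreasing_01 (Hfun h1) ->
  decreasing_01 (fun p => Hfun h1 p / Hfun h2 p) ->
  (decreasing_01 (fun p => (1 - p) * Derive (Hfun h1) p / Hfun h1 p) \/
   decreasing_01 (fun p => (1 - p) * Derive (Hfun h2) p / Hfun h2 p)) ->
  ages_faster SX SY ->
  rhr_le SY SX ->
  ages_faster (fun x => h1 (SX x)) (fun x => h2 (SY x)).
Proof.
  intros HX HY H1d H2d H1p H2p Hdec1 Hdecr Hpsi Haf Hrhr.
  unfold ages_faster. intros x y Hx Hxy.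
  rewrite (hazard_comp SX h1 x), (hazard_comp SX h1 y), (hazard_comp SY h2 x), (hazard_comp SY h2 y)
    by (auto; lra).
  rewrite !div_split.
  assert (Hhz : forall S t, lifetime S -> 0 < t -> 0 <= hazard S t).
  { intros S t HS Ht. pose proof (surv_bounds S t HS Ht). unfold hazard.
    apply Rdiv_le_0_compat; [apply dens_ge0|]; auto; lra. }
  apply Rmult_le_compat.
  - pose proof (Hhz SX x HX Hx). destruct (Hhz SY x HY Hx) as [Hp|Hz].
    apply Rdiv_le_0_compat; auto. rewrite <- Hz; unfold Rdiv; rewrite Rinv_0; lra.
  - apply G_nonneg; auto.
  - apply Haf; auto.
  - apply (G_mono SX SY h1 h2 x y); auto.
Qed.
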